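(* Let $G$ be a homogeneous complete $k$-partite graph, with vertices $t_1,\dots,t_s$. The following are equivalent: (a) the graph $\mathcal{G}_{I_c(G)}$ of $I_c(G)$ is a complete graph; (b) $G$ is a complete graph; (c) ${\rm v}(I_c(G))=\alpha_0(G)-1$.
   Context: $G$ is a homogeneous complete $k$-partite graph if $G=G_1*\cdots*G_k$, $k\ge2$, is the join of pairwise vertex-disjoint graphs without edges each having the same number $p$ of vertices (the join contains all edges between vertices of distinct $G_i$). Such a $G$ is unmixed (all minimal vertex covers have the same size). $\alpha_0(G)$ is the minimum size of a vertex cover. $I_c(G)\subset S=K[t_1,\ldots,t_s]$ ($K$ a field) is generated by $\prod_{t_i\in C}t_i$ over minimal vertex covers $C$. For unmixed $G$ with minimal vertex covers $C_1,\ldots,C_r$, the graph $\mathcal{G}_{I_c(G)}$ has vertex set $\{C_1,\ldots,C_r\}$ and $\{C_i,C_j\}$ ($i\neq j$) is an edge iff $|C_i\cup C_j|=|C_i|+1$. For a graded ideal $I\subset S$, ${\rm v}(I)=\min\{d\ge0:\exists f\in S_d,\ \exists\mathfrak p\in{\rm Ass}(I),\ (I\colon f)=\mathfrak p\}$. *)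

(* Defs.v *)
From HB Require Import structures.
From mathcomp Require Import all_boot all_order all_algebra.
From mathcomp Require Import mpoly.
Set Implicit Arguments. Unset Strict Implicit. Unset Printing Implicit Defensive.
Import GRing.Theory.
Local Open Scope ring_scope.

Definition multipartite_graph (T : finType) (k : nat) (part : T -> 'I_k) : rel T :=
  [rel x y | part x != part y].

Definition vertex_cover (T : finType) (e : rel T) (C : {set T}) : bool :=
  [forall x, forall y, e x y ==> (x \in C) || (y \in C)].

Definition minimal_vertex_cover (T : finType) (e : rel T) (C : {set T}) : bool :=
  minset (vertex_cover e) C.

(* alpha_0(G): minimum size of a vertex cover (setT is always a cover) *)
Definition alpha0 (T : finType) (e : rel T) : nat :=
  \big[minn/#|T|]_(C : {set T} | vertex_cover e C) #|C|.

Definition complete_graph (T : finType) (e : rel T) : Prop :=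
  forall x y, x != y -> e x y.

(* the graph G_{I_c(G)} is complete: any two distinct minimal vertex covers
   C, D satisfy |C u D| = |C| + 1 *)
Definition cover_graph_complete (T : finType) (e : rel T) : Prop :=
  forall C D : {set T}, minimal_vertex_cover e C -> minimal_vertex_cover e D ->
    C != D -> #|C :|: D| = (#|C| + 1)%N.

Definition ideal_of (K : fieldType) (n : nat) := {mpoly K[n]} -> Prop.

Definition gen_ideal (K : fieldType) (n : nat) (I : finType) (P : pred I)
    (g : I -> {mpoly K[n]}) : ideal_of K n :=
  fun f => exists h : I -> {mpoly K[n]}, f = \sum_(i | P i) h i * g i.

Definition cover_ideal (K : fieldType) (n : nat) (e : rel 'I_n) : ideal_of K n :=
  gen_ideal (minimal_vertex_cover e) (fun C : {set 'I_n} => \prod_(i in C) 'X_i).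

Definition colon (K : fieldType) (n : nat) (I : ideal_of K n) (f : {mpoly K[n]})
  : ideal_of K n := fun g => I (g * f).

Definition same_ideal (K : fieldType) (n : nat) (I J : ideal_of K n) : Prop :=
  forall x, I x <-> J x.

Definition prime_ideal (K : fieldType) (n : nat) (P : ideal_of K n) : Prop :=
  (exists x, ~ P x) /\ forall a b, P (a * b) -> P a \/ P b.

Definition associated_prime (K : fieldType) (n : nat) (I P : ideal_of K n) : Prop :=
  prime_ideal P /\ exists g, same_ideal P (colon I g).

(* d is attained in the definition of v(I): some f in S_d and p in Ass(I)
   with (I : f) = p (S_d = homogeneous polynomials of degree d, incl. 0) *)
Definition v_attained (K : fieldType) (n : nat) (I : ideal_of K n) (d : nat) : Prop :=
  exists f : {mpoly K[n]}, f \is d.-homog /\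
    exists P, associated_prime I P /\ same_ideal (colon I f) P.

Definition is_v_number (K : fieldType) (n : nat) (I : ideal_of K n) (d : nat) : Prop :=
  v_attained I d /\ forall d', v_attained I d' -> (d <= d')%N.
Arguments cover_ideal K {n} e _.

(* Main.v *)
Require Import Defs.
From HB Require Import structures.
From mathcomp Require Import all_boot all_order all_algebra.
From mathcomp Require Import mpoly.
From mathcomp Require Import zify.
Set Implicit Arguments. Unset Strict Implicit. Unset Printing Implicit Defensive.

Lemma bigmin_le (T : eqType) (r : seq T) (P : pred T) (F : T -> nat) i x0 :
  x0 \in r -> P x0 -> (\big[minn/i]_(x <- r | P x) F x <= F x0)%N.
Proof.
elim: r => // y r IH; rewrite in_cons big_cons => /orP [/eqP -> -> | hr hP].
  exact: geq_minl.
case: (P y); last exact: IH.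
exact: leq_trans (geq_minr _ _) (IH hr hP).
Qed.

Section Graph.
Variables (s k : nat) (part : 'I_s -> 'I_k).
Local Notation e := (multipartite_graph part).
Definition V j := [set x | part x == j].

Lemma coverP C : vertex_cover e C <->
  (forall x y, x \notin C -> y \notin C -> part x = part y).
Proof.
split.
  move=> /forallP H x y hx hy; move/forallP: (H x) => /(_ y) /implyP.
  rewrite /= (negbTE hx) (negbTE hy) /= => h; apply/eqP; apply/negPn/negP => hne.
  by have := h hne.
move=> H; apply/forallP => x; apply/forallP => y; apply/implyP => /= hne.
apply/negPn/negP; rewrite negb_or => /andP [hx hy].
by move/eqP: hne; apply; apply: H.
Qed.

Lemma coverV j : vertex_cover e (~: V j).
Proof.
apply/coverP => x y; rewrite !in_setC !negbK !inE => /eqP -> /eqP -> //.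
Qed.

Lemma cover_sub C (j0 : 'I_k) : vertex_cover e C -> exists j, ~: V j \subset C.
Proof.
move/coverP => H.
case: (boolP [exists x, x \notin C]).
  move/existsP => [x hx]; exists (part x); apply/subsetP => y.
  rewrite in_setC inE => hy; apply/negPn/negP => hyC.
  by move/eqP: hy; apply; apply: H.
move=> hall; exists j0; apply/subsetP => y _.
by apply/negPn/negP => hy; move/negP: hall; apply; apply/existsP; exists y.
Qed.

Hypothesis (p : nat) (hp : (1 <= p)%N) (hcard : forall j, #|V j| = p).

Lemma V_nonempty j : exists x, x \in V j.
Proof. apply/set0Pn; rewrite -card_gt0 hcard //. Qed.

Lemma minimalP C (j0 : 'I_k) : minimal_vertex_cover e C <-> exists j, C = ~: V j.
Proof.
split.
  move/minsetP => [hC hmin]; have [j hj] := cover_sub j0 hC.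
  by exists j; symmetry; apply: hmin => //; apply: coverV.
move=> [j ->]; apply/minsetP; split; first exact: coverV.
move=> B hB hsub; apply/eqP; rewrite eqEsubset hsub /=.
apply/subsetP => x hx; apply/negPn/negP => hxB.
have [y hy] := V_nonempty j.
have hyB : y \notin B by apply/negP => /(subsetP hsub); rewrite in_setC hy.
move/coverP: hB => /(_ x y hxB hyB).
by move: hx hy; rewrite in_setC !inE => /eqP hx /eqP -> .
Qed.

Lemma card_cV j : #|~: V j| = (s - p)%N.
Proof.
have := cardsC (V j); rewrite hcard => h.
have hs : #|[set: 'I_s]| = s by rewrite cardsT card_ord.
have h2 : #|'I_s| = s by rewrite card_ord.
rewrite h2 in h; by rewrite -[in RHS]h addKn.
Qed.

Lemma alpha0E (j0 : 'I_k) : alpha0 e = (s - p)%N.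
Proof.
apply/eqP; rewrite eqn_leq; apply/andP; split.
  rewrite -(card_cV j0); apply: bigmin_le; [exact: mem_index_enum|exact: coverV].
rewrite /alpha0; apply: (big_ind (fun x => s - p <= x)%N).
- by rewrite card_ord leq_subr.
- by move=> x y hx hy; rewrite leq_min hx hy.
move=> C hC; have [j hj] := cover_sub j0 hC.
by rewrite -(card_cV j); apply: subset_leq_card.
Qed.

End Graph.
Import GRing.Theory.
Local Open Scope ring_scope.

Section Ideal.
Variables (K : fieldType) (n : nat) (I : finType) (P : pred I) (g : I -> {mpoly K[n]}).
Local Notation J := (gen_ideal P g).

Lemma gen0 : J 0.
Proof. by exists (fun _ => 0); rewrite big1 // => i _; rewrite mul0r. Qed.

Lemma genD x y : J x -> J y -> J (x + y).
Proof.
move=> [h1 ->] [h2 ->]; exists (fun i => h1 i + h2 i).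
by rewrite -big_split /=; apply: eq_bigr => i _; rewrite mulrDl.
Qed.

Lemma genM c x : J x -> J (c * x).
Proof.
move=> [h ->]; exists (fun i => c * h i).
by rewrite mulr_sumr; apply: eq_bigr => i _; rewrite mulrA.
Qed.

Lemma genG i : P i -> J (g i).
Proof.
move=> Pi; exists (fun j => if j == i then 1 else 0).
rewrite (bigD1 i) //= eqxx mul1r big1 ?addr0 // => j /andP [_ /negbTE ->].
by rewrite mul0r.
Qed.

Lemma gen_sum (T : Type) (r : seq T) (F : T -> {mpoly K[n]}) :
  (forall t, J (F t)) -> J (\sum_(t <- r) F t).
Proof.
move=> H; elim: r => [|t r IH]; first by rewrite big_nil; exact: gen0.
by rewrite big_cons; apply: genD.
Qed.

Lemma mcoeffMX0 (p : {mpoly K[n]}) M m : ~~ (M <= m)%MM -> (p * 'X_[M])@_m = 0.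
Proof.
move=> hM; rewrite [p]mpolyE mulr_suml raddf_sum /= big1 // => u _.
rewrite -scalerAl -mpolyXD mcoeffZ mcoeffX.
case: eqP => [hu|]; last by rewrite mulr0.
by move: hM; rewrite -hu lem_addl.
Qed.

Lemma gen_coeff (M : I -> 'X_{1..n}) x m :
  (forall i, g i = 'X_[M i]) -> J x -> x@_m != 0 -> exists i, P i /\ (M i <= m)%MM.
Proof.
move=> hg [h ->]; rewrite raddf_sum /= => hne.
case: (boolP [exists i, P i && (M i <= m)%MM]).
  by move/existsP => [i /andP [h1 h2]]; exists i.
move=> hno; move: hne; rewrite big1 ?eqxx // => i Pi.
rewrite hg mcoeffMX0 //; apply/negP => hle; move/negP: hno; apply.
by apply/existsP; exists i; rewrite Pi hle.
Qed.
End Ideal.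
Section Mono.
Variables (K : fieldType) (n : nat).

Definition mC (C : {set 'I_n}) : 'X_{1..n} := (\sum_(i in C) U_(i))%MM.

Lemma mCE (C : {set 'I_n}) i : mC C i = (i \in C).
Proof.
rewrite /mC mnm_sumE; case: (boolP (i \in C)) => hi.
  rewrite (bigD1 i) //= mnm1E eqxx big1 ?addn0 // => j /andP [_ hj].
  by rewrite mnm1E (negbTE hj).
by rewrite big1 // => j hj; rewrite mnm1E; case: eqP => // hji; rewrite -hji hj in hi.
Qed.

Lemma prodX (C : {set 'I_n}) : \prod_(i in C) 'X_i = 'X_[mC C] :> {mpoly K[n]}.
Proof.
rewrite /mC; apply/esym; apply: (big_morph (fun m => 'X_[m])).
  by move=> x y; rewrite mpolyXD.
exact: mpolyX0.
Qed.

Lemma mdeg_mC (C : {set 'I_n}) : mdeg (mC C) = #|C|.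
Proof. by rewrite /mC mdeg_sum (eq_bigr (fun _ => 1%N)) ?sum1_card // => i _; rewrite mdeg1. Qed.

Lemma mdeg_le (m1 m2 : 'X_{1..n}) : (m1 <= m2)%MM -> (mdeg m1 <= mdeg m2)%N.
Proof. move/mnm_lepP => h; rewrite !mdegE; exact: leq_sum. Qed.

Lemma lem_eq (m1 m2 : 'X_{1..n}) : (m1 <= m2)%MM -> mdeg m1 = mdeg m2 -> m1 = m2.
Proof.
move=> hle hd; have := submK hle; set d := (m2 - m1)%MM => hD.
have : mdeg d = 0%N by apply/eqP; rewrite -(eqn_add2r (mdeg m1)) add0n -mdegD hD hd.
by move/eqP; rewrite mdeg_eq0 => /eqP hd0; rewrite -hD hd0 add0m.
Qed.

Lemma prime_prod (Q : {mpoly K[n]} -> Prop) (T : Type) (r : seq T) (R : pred T) F :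
  (forall a b, Q (a * b) -> Q a \/ Q b) -> ~ Q 1 ->
  Q (\prod_(t <- r | R t) F t) -> exists t, R t /\ Q (F t).
Proof.
move=> hpr h1; elim: r => [|t r IH]; first by rewrite big_nil.
rewrite big_cons; case: (boolP (R t)) => hR; last exact: IH.
by case/hpr => [h|/IH //]; exists t.
Qed.

End Mono.

Section Main.
Variables (K : fieldType) (s k : nat) (part : 'I_s -> 'I_k).
Local Notation e := (multipartite_graph part).
Local Notation Ic := (cover_ideal K e).

Lemma not_colon1 (f : {mpoly K[s]}) : prime_ideal (colon Ic f) -> ~ colon Ic f 1.
Proof.
move=> [[x hx] _] h1; apply: hx; rewrite /colon in h1 *.
by rewrite mul1r in h1; apply: genM.
Qed.

Lemma colon_nz (f : {mpoly K[s]}) : prime_ideal (colon Ic f) -> f != 0.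
Proof.
move=> hP; apply/negP => /eqP hf; apply: (not_colon1 hP).
by rewrite /colon hf mulr0; apply: gen0.
Qed.

Lemma colon_var (f : {mpoly K[s]}) C : prime_ideal (colon Ic f) ->
  minimal_vertex_cover e C -> exists i, i \in C /\ colon Ic f 'X_i.
Proof.
move=> hP hC; have h1 := not_colon1 hP; case: hP => _ hpr.
have hg : colon Ic f (\prod_(i in C) 'X_i).
  by rewrite /colon mulrC; apply: genM; rewrite /cover_ideal; apply: genG.
exact: (prime_prod hpr h1 hg).
Qed.

Lemma colon_coeff (f : {mpoly K[s]}) a u : colon Ic f 'X_a -> f@_u != 0 ->
  exists C, minimal_vertex_cover e C /\ (mC C <= U_(a) + u)%MM.
Proof.
move=> ha hu; apply: (gen_coeff (M := @mC s)) ha _ => //.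
  by move=> C; rewrite prodX.
by rewrite mulrC mcoeffMX.
Qed.

End Main.

Section Main2.
Variables (K : fieldType) (s k : nat) (part : 'I_s -> 'I_k).
Local Notation e := (multipartite_graph part).
Local Notation Ic := (cover_ideal K e).
Variables (p : nat) (hp : (1 <= p)%N) (hcard : forall j, #|V part j| = p).
Variable (j0 : 'I_k).

Lemma minV j : minimal_vertex_cover e (~: V part j).
Proof. by apply/(minimalP hp hcard _ j0); exists j. Qed.

Lemma exists_coeff (f : {mpoly K[s]}) : f != 0 -> exists u, f@_u != 0.
Proof.
rewrite -msupp_eq0; case E: (msupp f) => [|u r] // _; exists u.
by rewrite -mcoeff_msupp E mem_head.
Qed.

Lemma deg_bound (f : {mpoly K[s]}) d : f \is d.-homog -> prime_ideal (colon Ic f) ->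
  (s - p <= d.+1)%N.
Proof.
move=> hf hP; have [a [_ ha]] := colon_var hP (minV j0).
have [u hu] := exists_coeff (colon_nz hP).
have [C [hC hle]] := colon_coeff ha hu.
have [j hj] := (minimalP hp hcard C j0).1 hC.
have := mdeg_le hle; rewrite mdegD mdeg1 mdeg_mC hj (card_cV hcard).
by rewrite (dhomog_mf hf) // mcoeff_msupp.
Qed.


Lemma not_att (f : {mpoly K[s]}) (j1 : 'I_k) : j1 != j0 -> (2 <= p)%N -> f \is (s - p - 1).-homog ->
  ~ prime_ideal (colon Ic f).
Proof.
move=> hj10 hp2 hf hP.
have [u hu] := exists_coeff (colon_nz hP).
have hdu : mdeg u = (s - p - 1)%N by rewrite (dhomog_mf hf) // mcoeff_msupp.
have hsp : (1 <= s - p)%N.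
  have [x hx] := V_nonempty hp hcard j1.
  rewrite -(card_cV hcard j0) card_gt0; apply/set0Pn; exists x; rewrite in_setC inE.
  by move: hx; rewrite inE => /eqP ->.
have key : forall c, colon Ic f 'X_c -> exists j, mC (~: V part j) = (U_(c) + u)%MM.
  move=> c hc; have [C [hC hle]] := colon_coeff hc hu.
  have [j hj] := (minimalP hp hcard C j0).1 hC; exists j; rewrite -hj.
  apply: lem_eq hle _; rewrite mdegD mdeg1 hdu mdeg_mC hj (card_cV hcard); lia.
have [a [_ ha]] := colon_var hP (minV j0).
have [b [hb hbX]] := colon_var hP (minV (part a)).
have hab : part b != part a by move: hb; rewrite in_setC inE.
have hab' : a != b by apply/negP => /eqP hh; move: hab; rewrite hh eqxx.
have [j hj] := key a ha; have [j' hj'] := key b hbX.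
have ev : forall (m1 m2 : 'X_{1..s}) i, m1 = m2 -> m1 i = m2 i by move=> ? ? ? ->.
have E1 := ev _ _ a hj; have E2 := ev _ _ b hj; have E3 := ev _ _ a hj'; have E4 := ev _ _ b hj'.
rewrite !mCE !mnmDE !mnm1E eqxx in E1 E4.
rewrite !mCE !mnmDE !mnm1E (negbTE hab') in E2.
rewrite !mCE !mnmDE !mnm1E eq_sym (negbTE hab') in E3.
have ua : u a = 0%N by move: E1 (leq_b1 (a \in ~: V part j)); lia.
have ub : u b = 0%N by move: E4 (leq_b1 (b \in ~: V part j')); rewrite eqxx; lia.
rewrite ub in E2; rewrite ua in E3.
have hbj : part b = j.
  by move: E2; case: (boolP (b \in ~: V part j)) => //; rewrite in_setC inE negbK => /eqP.
have haj : part a = j'.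
  by move: E3; case: (boolP (a \in ~: V part j')) => //; rewrite in_setC inE negbK => /eqP.
have : (1 < #|V part (part b)|)%N by rewrite hcard.
move/card_gt1P => [x [y [hx hy hxy]]].
have [c [hc hcb]] : exists c, c \in V part (part b) /\ c != b.
  case: (eqVneq x b) => [hxb|hxb]; last by exists x.
  by exists y; split => //; rewrite -hxb eq_sym.
have hca : c != a.
  apply/negP => /eqP hh; move: hc; rewrite inE hh => /eqP hh2; move: hab; rewrite hh2 eqxx //.
have Ec := ev _ _ c hj; have Ec' := ev _ _ c hj'.
rewrite !mCE !mnmDE !mnm1E eq_sym (negbTE hca) in Ec.
rewrite !mCE !mnmDE !mnm1E eq_sym (negbTE hcb) in Ec'.
move: hc; rewrite inE => /eqP hcp.
move: Ec Ec'; rewrite !in_setC !inE hcp hbj eqxx -haj.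
rewrite hbj in hab; rewrite hab /=; by move=> <-.
Qed.

Lemma gen_mon m : (exists C, minimal_vertex_cover e C /\ (mC C <= m)%MM) -> Ic 'X_[m].
Proof.
move=> [C [hC hle]]; rewrite -(submK hle) mpolyXD; apply: genM.
by rewrite -prodX /cover_ideal; apply: genG.
Qed.

Lemma uniq_part x y : p = 1%N -> part x = part y -> x = y.
Proof.
move=> hp1 hxy; apply/eqP; apply: contraT => hne.
have : (1 < #|V part (part y)|)%N.
  by apply/card_gt1P; exists x, y; rewrite !inE hxy eqxx.
by rewrite hcard hp1.
Qed.

Lemma cover_le (a b : 'I_s) (u : 'X_{1..s}) : p = 1%N -> a != b -> u a != 0%N ->
  (mC (~: V part (part b)) <= u + mC (~: [set a; b]))%MM.
Proof.
move=> hp1 hab hu; apply/mnm_lepP => i; rewrite mnmDE !mCE !in_setC !inE.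
case: (eqVneq i b) => [->|hib]; first by rewrite eqxx.
have -> : (part i == part b) = false.
  by apply/negbTE/negP => /eqP /(uniq_part hp1) hh; move/eqP: hib.
rewrite orbF; case: (eqVneq i a) => [->|hia] /=; first by rewrite addn0 lt0n.
by rewrite addn1.
Qed.

Definition lqt (a b : 'I_s) : s.-tuple {mpoly K[s]} :=
  [tuple (if (i == a) || (i == b) then 0 else 'X_i) | i < s].

Lemma phiX a b m : comp_mpoly (lqt a b) 'X_[m] =
  if (m a == 0%N) && (m b == 0%N) then 'X_[m] else 0.
Proof.
rewrite comp_mpolyX; case: ifP => [/andP [/eqP ha /eqP hb] | hz].
  rewrite [RHS]mpolyXE_id; apply: eq_bigr => i _; rewrite tnth_mktuple.
  case: ifP => // /orP [/eqP -> | /eqP ->]; by rewrite ?ha ?hb !expr0.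
have [c [hc hmc]] : exists c, ((c == a) || (c == b)) /\ m c != 0%N.
  move/negbT: hz; rewrite negb_and => /orP [h|h]; [exists a | exists b];
    by rewrite ?eqxx ?orbT.
rewrite (bigD1 c) //= tnth_mktuple hc expr0n (negbTE hmc) /=.
by rewrite mul0r.
Qed.

Lemma key_prime (a b : 'I_s) : p = 1%N -> part a != part b ->
  prime_ideal (colon Ic 'X_[mC (~: [set a; b])]).
Proof.
move=> hp1 hpab.
have hab : a != b by apply/negP => /eqP hh; move: hpab; rewrite hh eqxx.
set f := 'X_[mC (~: [set a; b])].
have phif : comp_mpoly (lqt a b) f = f.
  by rewrite /f phiX !mCE !in_setC !in_set2 !eqxx /= orbT.
have fnz : f != 0.
  apply/eqP => h; have : f@_(mC (~: [set a; b])) = 1 by rewrite mcoeffX eqxx.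
  by rewrite h mcoeff0 => /esym /eqP; rewrite oner_eq0.
have phiI : forall x, Ic x -> comp_mpoly (lqt a b) x = 0.
  move=> x [h ->]; rewrite rmorph_sum big1 // => C hC; rewrite rmorphM /= prodX phiX.
  have [j ->] := (minimalP hp hcard C j0).1 hC.
  rewrite !mCE !in_setC !inE.
  case: (eqVneq (part a) j) => [ha|ha]; case: (eqVneq (part b) j) => [hb|hb] /=;
    rewrite ?mulr0 //; by move: hpab; rewrite ha hb eqxx.
have colonE : forall g, colon Ic f g <-> comp_mpoly (lqt a b) g = 0.
  move=> g; split.
    move=> hg; have := phiI _ hg; rewrite rmorphM /= phif => /eqP.
    by rewrite mulf_eq0 (negbTE fnz) orbF => /eqP.
  move=> hg; rewrite /colon.
  have h1 : comp_mpoly (lqt a b) g =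
      \sum_(u <- msupp g) g@_u *: comp_mpoly (lqt a b) 'X_[u].
    by rewrite {1}[g]mpolyE rmorph_sum; apply: eq_bigr => u _; rewrite /= comp_mpolyZ.
  have -> : g = \sum_(u <- msupp g) g@_u *: ('X_[u] - comp_mpoly (lqt a b) 'X_[u]).
    transitivity (g - comp_mpoly (lqt a b) g); first by rewrite hg subr0.
    rewrite h1 {1}[g]mpolyE -sumrB; apply: eq_bigr => u _; by rewrite scalerBr.
  rewrite mulr_suml; apply: gen_sum => u.
  rewrite phiX; case: ifP => hz; first by rewrite subrr scaler0 mul0r; apply: gen0.
  rewrite subr0 -scalerAl -mul_mpolyC; apply: genM; rewrite /f -mpolyXD; apply: gen_mon.
  move/negbT: hz; rewrite negb_and => /orP [hu|hu].
    by exists (~: V part (part b)); split; [exact: minV | exact: cover_le].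
  exists (~: V part (part a)); split; first exact: minV.
  by rewrite setUC; apply: cover_le => //; rewrite eq_sym.
split.
  by exists 1; rewrite colonE rmorph1 => /eqP; rewrite oner_eq0.
move=> x y; rewrite !colonE rmorphM => /eqP; rewrite mulf_eq0.
by case/orP => /eqP h; [left|right].
Qed.

End Main2.

Local Close Scope ring_scope.
Lemma prime_transfer (K : fieldType) n (A B : ideal_of K n) :
  same_ideal A B -> prime_ideal B -> prime_ideal A.
Proof.
move=> hAB [[x hx] hpr]; split; first by exists x => /hAB.
by move=> a b /hAB /hpr [h|h]; [left|right]; apply/hAB.
Qed.

Unset Implicit Arguments.

Theorem corollary3p15 (K : fieldType) (s k p : nat) (part : 'I_s -> 'I_k) :
  (2 <= k)%N -> (1 <= p)%N ->
  (forall j : 'I_k, #|[set x | part x == j]| = p) ->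
  let e := multipartite_graph part in
  (cover_graph_complete e <-> complete_graph e) /\
  (complete_graph e <-> is_v_number (cover_ideal K e) (alpha0 e - 1)).
Proof.
move=> hk hp hcard' e.
have hcard : forall j, #|V part j| = p by [].
have hk0 : (0 < k)%N by apply: leq_trans hk.
pose j0 : 'I_k := Ordinal hk0. pose j1 : 'I_k := Ordinal hk.
have hj10 : j1 != j0 by [].
have [a ha] := V_nonempty hp hcard j0. have [b hb] := V_nonempty hp hcard j1.
have hpab : part a != part b by move: ha hb; rewrite !inE => /eqP -> /eqP ->.
have hab : a != b by apply/negP => /eqP hh; move: hpab; rewrite hh eqxx.
have hcomp : complete_graph e <-> p = 1%N.
  split.
    move=> hc; apply/eqP; rewrite eqn_leq hp andbT leqNgt; apply/negP.
    rewrite -(hcard j0) => /card_gt1P [x [y [hx hy hxy]]].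
    have := hc x y hxy; rewrite /e /multipartite_graph /=; move: hx hy; rewrite !inE => /eqP -> /eqP ->.
    by rewrite eqxx.
  move=> hp1 x y hxy; rewrite /e /multipartite_graph /=; apply/negP => /eqP /(uniq_part hcard hp1) hh.
  by move: hxy; rewrite hh eqxx.
have hsp : (p <= s - p)%N.
  rewrite -(card_cV hcard j0) -(hcard j1); apply: subset_leq_card; apply/subsetP => x.
  by rewrite in_setC !inE => /eqP ->.
have hs : #|'I_s| = s by rewrite card_ord.
have hA := alpha0E hcard j0.
split.
  rewrite hcomp; split.
    move=> hc.
    have hCD : ~: V part j0 != ~: V part j1.
      apply/negP => /eqP hh; have : a \in ~: V part j1 by rewrite in_setC inE (eqP (_ : part a == j0)) //; by move: ha; rewrite inE.
      by rewrite -hh in_setC ha.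
    have := hc _ _ (minV hp hcard j0 j0) (minV hp hcard j0 j1) hCD.
    have -> : ~: V part j0 :|: ~: V part j1 = setT.
      apply/setP => x; rewrite !inE -negb_and; apply/negP => /andP [/eqP h1 /eqP h2].
      by move: hj10; rewrite -h1 -h2 eqxx.
    rewrite cardsT hs (card_cV hcard); lia.
  move=> hp1 C D hC hD hCD.
  have [j hj] := (minimalP hp hcard C j0).1 hC; have [j' hj'] := (minimalP hp hcard D j0).1 hD.
  have hjj : j != j' by apply/negP => /eqP hh; move: hCD; rewrite hj hj' hh eqxx.
  have -> : C :|: D = setT.
    apply/setP => x; rewrite hj hj' !inE -negb_and; apply/negP => /andP [/eqP h1 /eqP h2].
    by move: hjj; rewrite -h1 -h2 eqxx.
  rewrite cardsT hs hj (card_cV hcard); lia.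
rewrite hcomp hA; split.
  move=> hp1; split.
    exists 'X_[mC (~: [set a; b])]; split.
      rewrite dhomogX -[X in X == _]/(mdeg _) mdeg_mC; apply/eqP.
      have := cardsC [set a; b]; rewrite cards2 hab hs /=.
      set c := #|~: [set a; b]|; clearbody c; lia.
    exists (colon (cover_ideal K e) 'X_[mC (~: [set a; b])]); split; last by [].
    split; first exact: (key_prime K hp hcard j0 hp1 hpab).
    by exists 'X_[mC (~: [set a; b])].
  move=> d [f [hf [P [[hP _] hfP]]]].
  have := deg_bound hp hcard j0 hf (prime_transfer hfP hP); lia.
move=> [[f [hf [P [[hP _] hfP]]]] _].
apply/eqP; rewrite eqn_leq hp andbT leqNgt; apply/negP => hp2.
exact: (not_att hp hcard hj10 hp2 hf (prime_transfer hfP hP)).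
Qed.
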